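(* (a) Let $n\ge2$ and $m$ be integers with $\gcd(m,n)=1$, and let $\lambda=re^{\pi i m/n}$ with $r\in[2^{-1/n},1)$. Then $A_\lambda$ is a $2n$-gon all of whose angles equal $\pi(n-1)/n$; in particular $A_\lambda$ has non-empty interior. (b) Let $n\ge1$ and $m$ be integers with $\gcd(m,2n+1)=1$, and let $\lambda=re^{2\pi i m/(2n+1)}$ with $r\in[2^{-1/(2n+1)},1)$. Then $A_\lambda$ is a $(4n+2)$-gon all of whose angles equal $2n\pi/(2n+1)$; in particular $A_\lambda$ has non-empty interior.
   Context: $A_\lambda=\{\sum_{n\ge0}a_n\lambda^n:a_n\in\{-1,1\}\}$ for $|\lambda|<1$, the attractor of the iterated function system $\{\lambda z-1,\lambda z+1\}$. *)

(* Defs.v *)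
From Stdlib Require Import Reals ZArith.
From Coquelicot Require Import Coquelicot.
Open Scope C_scope.

Definition A_set (lam : C) : C -> Prop :=
  fun z => exists a : nat -> C, (forall j, a j = RtoC 1 \/ a j = RtoC (-1)) /\
    @is_series C_AbsRing C_NormedModule (fun j => a j * lam ^ j) z.

Definition cis (t : R) : C := (cos t, sin t).

Definition conv_hull (k : nat) (v : nat -> C) : C -> Prop :=
  fun z => exists w : nat -> R, (forall j, (j < k)%nat -> 0 <= w j)%R /\
    sum_n (fun j => w j) (k - 1) = 1%R /\
    z = sum_n (fun j => RtoC (w j) * v j) (k - 1).

(* [is_polygon_all_angles A k theta]: A is (the closed region bounded by) a
   k-gon whose vertices, listed counterclockwise and indexed periodically
   (v (j+k) = v j), are v 0, ..., v (k-1), and whose interior angle at every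
   vertex equals theta.  The interior angle at v (j+1) being theta means that
   the edge direction turns by exactly pi - theta (counterclockwise) there:
   the next edge is a positive real multiple of e^{i(pi-theta)} times the
   previous edge. *)
Definition is_polygon_all_angles (A : C -> Prop) (k : nat) (theta : R) : Prop :=
  exists v : nat -> C,
    (forall j, v (j + k)%nat = v j) /\
    (forall j, v (S j) - v j <> RtoC 0) /\
    (forall j, exists rho : R, (0 < rho)%R /\
        v (S (S j)) - v (S j) = RtoC rho * cis (PI - theta) * (v (S j) - v j)) /\
    (forall z, A z <-> conv_hull k v z).

Definition nonempty_interior (A : C -> Prop) : Prop :=
  exists z : C, exists eps : R, (0 < eps)%R /\
    forall w : C, (Cmod (w - z) < eps)%R -> A w.

(* Submission.v *)
Require Import Defs.
From Stdlib Require Import Reals ZArith Lia Lra.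
From Coquelicot Require Import Coquelicot.
Open Scope C_scope.


Definition cr (x y : C) : R := (fst x * snd y - snd x * fst y)%R.

Lemma Cfst_sum (f : nat -> C) K : fst (sum_n f K) = sum_n (fun l => fst (f l)) K.
Proof. induction K; [rewrite !sum_O; auto| rewrite !sum_Sn, <- IHK; reflexivity]. Qed.
Lemma Csnd_sum (f : nat -> C) K : snd (sum_n f K) = sum_n (fun l => snd (f l)) K.
Proof. induction K; [rewrite !sum_O; auto| rewrite !sum_Sn, <- IHK; reflexivity]. Qed.

Lemma cr_plus x a b : cr x (a + b) = (cr x a + cr x b)%R.
Proof. unfold cr; simpl; ring. Qed.

Lemma cr_sum x (f : nat -> C) K : cr x (sum_n f K) = sum_n (fun l => cr x (f l)) K.
Proof. induction K; [rewrite !sum_O; auto| rewrite !sum_Sn, <- IHK].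
 apply cr_plus. Qed.

Lemma sum_le (f g : nat -> R) K : (forall l, (l <= K)%nat -> f l <= g l)%R ->
  (sum_n f K <= sum_n g K)%R.
Proof. induction K; intros H.
 - rewrite !sum_O; apply H; lia.
 - rewrite !sum_Sn. apply Rplus_le_compat; [apply IHK; intros; apply H; lia| apply H; lia]. Qed.

Lemma sum_zero {G : AbelianMonoid} (f : nat -> G) K : (forall l, (l <= K)%nat -> f l = zero) ->
  sum_n f K = zero.
Proof. induction K; intros H.
 - rewrite sum_O; apply H; lia.
 - rewrite sum_Sn, IHK. rewrite H by lia. apply plus_zero_l. intros; apply H; lia. Qed.

Lemma sum_single {G : AbelianMonoid} (f : nat -> G) K p : (p <= K)%nat ->
  (forall l, (l <= K)%nat -> l <> p -> f l = zero) -> sum_n f K = f p.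
Proof. induction K; intros Hp H.
 - rewrite sum_O. replace p with 0%nat by lia. auto.
 - rewrite sum_Sn. destruct (Nat.eq_dec p (S K)).
   + subst. rewrite sum_zero. apply plus_zero_l. intros; apply H; lia.
   + rewrite IHK by (lia || (intros; apply H; lia)). rewrite (H (S K)) by lia. apply plus_zero_r.
Qed.

Lemma sum_ge_term (f : nat -> R) K p : (p <= K)%nat -> (forall l, (l <= K)%nat -> 0 <= f l)%R ->
  (f p <= sum_n f K)%R.
Proof. induction K; intros Hp H.
 - rewrite sum_O. replace p with 0%nat by lia. lra.
 - rewrite sum_Sn. destruct (Nat.eq_dec p (S K)).
   + subst. change (plus (sum_n f K) (f (S K))) with (sum_n f K + f (S K))%R.
     assert (0 <= sum_n f K)%R. { assert (E0: sum_n (fun _ : nat => 0%R) K = 0%R) by (apply (sum_zero (G:=R_AbelianMonoid)); auto).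
       rewrite <- E0. apply sum_le. intros; apply H; lia. } lra.
   + change (plus (sum_n f K) (f (S K))) with (sum_n f K + f (S K))%R.
     assert (f p <= sum_n f K)%R by (apply IHK; [lia| intros; apply H; lia]).
     assert (0 <= f (S K))%R by (apply H; lia). lra.
Qed.

Lemma Cmod_sum (f : nat -> C) K : (Cmod (sum_n f K) <= sum_n (fun l => Cmod (f l)) K)%R.
Proof. induction K.
 - rewrite !sum_O; lra.
 - rewrite !sum_Sn. eapply Rle_trans. apply Cmod_triangle.
   change (plus (sum_n (fun l : nat => Cmod (f l)) K) (Cmod (f (S K)))) with
    (sum_n (fun l : nat => Cmod (f l)) K + Cmod (f (S K)))%R. lra. Qed.

Lemma sum_shift {G : AbelianMonoid} (f : nat -> G) K :
  sum_n f (S K) = plus (f 0%nat) (sum_n (fun l => f (S l)) K).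
Proof. induction K.
 - rewrite sum_Sn, !sum_O. reflexivity.
 - rewrite sum_Sn, IHK, sum_Sn. symmetry; apply plus_assoc. Qed.

Lemma Csum_RtoC (x : nat -> R) (y : C) K :
  sum_n (fun j => RtoC (x j) * y) K = RtoC (sum_n x K) * y.
Proof. induction K.
 - rewrite !sum_O; auto.
 - rewrite !sum_Sn, IHK. change (plus (sum_n x K) (x (S K))) with (sum_n x K + x (S K))%R.
   change (plus (RtoC (sum_n x K) * y) (RtoC (x (S K)) * y)) with (RtoC (sum_n x K) * y + RtoC (x (S K)) * y).
   rewrite RtoC_plus. match goal with |- ?a = ?b => change (@eq C a b) end; ring. Qed.

Lemma Csum_mult_l (a : C) (f : nat -> C) K : sum_n (fun j => a * f j) K = a * sum_n f K.
Proof. apply (sum_n_mult_l (K:=C_Ring)). Qed.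

Lemma Csum_plus (f g : nat -> C) K : sum_n (fun j => f j + g j) K = sum_n f K + sum_n g K.
Proof. apply (sum_n_plus (G:=C_AbelianMonoid)). Qed.

Lemma Rsum_plus (f g : nat -> R) K : sum_n (fun j => f j + g j)%R K = (sum_n f K + sum_n g K)%R.
Proof. apply (sum_n_plus (G:=R_AbelianMonoid)). Qed.

Lemma Rsum_mult_l (a : R) (f : nat -> R) K : sum_n (fun j => a * f j)%R K = (a * sum_n f K)%R.
Proof. apply (sum_n_mult_l (K:=R_Ring)). Qed.

Lemma disc_ivt (f : nat -> R) a b : (a < b)%nat -> (0 <= f a)%R -> (f b <= 0)%R ->
  exists i, (a <= i < b)%nat /\ (0 <= f i)%R /\ (f (S i) <= 0)%R.
Proof. induction b; intros Hab Ha Hb; [lia|].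
 destruct (Rle_dec 0 (f b)).
 - exists b; split; [lia| auto].
 - destruct (Nat.eq_dec a b). { subst. lra. }
   destruct IHb as [i [Hi1 Hi2]]; [lia| auto| lra|]. exists i; split; [lia| auto].
Qed.

Definition cis_mult a b : cis a * cis b = cis (a + b).
Proof. unfold cis. apply injective_projections; simpl; rewrite ?cos_plus, ?sin_plus; ring. Qed.


Lemma ball_C (z y : C) (eps : R) : ball z eps y ->
  (Rabs (fst y - fst z) < eps /\ Rabs (snd y - snd z) < eps)%R.
Proof. intros [H1 H2]. split; [exact H1| exact H2]. Qed.

Lemma lim_cr (f : nat -> C) z e p : @is_series C_AbsRing C_NormedModule f z ->
  (forall k, 0 <= cr e (sum_n f k - p))%R -> (0 <= cr e (z - p))%R.
Proof.
  intros Hs Hk. destruct (Rle_dec 0 (cr e (z - p))) as [?|Hn]; [auto|exfalso].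
  set (d := (- cr e (z - p))%R). assert (Hd : (0 < d)%R) by (unfold d; lra).
  set (K := (Rabs (fst e) + Rabs (snd e) + 1)%R).
  assert (HK : (0 < K)%R) by (unfold K; pose proof (Rabs_pos (fst e)); pose proof (Rabs_pos (snd e)); lra).
  assert (He : (0 < d / K)%R) by (apply Rdiv_lt_0_compat; auto).
  unfold is_series in Hs. pose proof (proj1 (filterlim_locally _ _) Hs (mkposreal _ He)) as Hs2. clear Hs. rename Hs2 into Hs.
  destruct Hs as [N0 HN0]. specialize (HN0 N0 (le_n _)). apply ball_C in HN0. change (pos (mkposreal _ He)) with (d / K)%R in HN0.
  specialize (Hk N0). set (s := sum_n f N0) in *.
  destruct HN0 as [H1 H2]. change (@sum_n C_NormedModule f N0) with s in H1, H2.
  assert (E : (cr e (s - p) = cr e (z - p) + (fst e * (snd s - snd z) - snd e * (fst s - fst z)))%R)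
    by (unfold cr; simpl; ring).
  assert (B1 : (Rabs (fst e * (snd s - snd z)) <= Rabs (fst e) * (d / K))%R).
  { rewrite Rabs_mult. apply Rmult_le_compat_l; [apply Rabs_pos| lra]. }
  assert (B2 : (Rabs (snd e * (fst s - fst z)) <= Rabs (snd e) * (d / K))%R).
  { rewrite Rabs_mult. apply Rmult_le_compat_l; [apply Rabs_pos| lra]. }
  assert (B3 : (Rabs (fst e) * (d / K) + Rabs (snd e) * (d / K) < d)%R).
  { replace (Rabs (fst e) * (d / K) + Rabs (snd e) * (d / K))%R with (d * ((K - 1) / K))%R
      by (unfold K in *; field; lra).
    assert ((K - 1) / K < 1)%R. { apply Rmult_lt_reg_r with K; auto. unfold Rdiv. rewrite Rmult_assoc, Rinv_l by lra. lra. }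
    nra. }
  pose proof (Rle_abs (fst e * (snd s - snd z))). pose proof (Rabs_Ropp (snd e * (fst s - fst z))).
  pose proof (Rle_abs (- (snd e * (fst s - fst z)))).
  unfold d in *. lra.
Qed.


Ltac Cring := match goal with |- ?a = ?b => change (@eq C a b) end; ring.

Lemma Csum_minus (f g : nat -> C) K : sum_n f K - sum_n g K = sum_n (fun j => f j - g j) K.
Proof. induction K.
 - rewrite !sum_O; auto.
 - rewrite !sum_Sn. rewrite <- IHK.
   change (@eq C ((sum_n f K + f (S K)) - (sum_n g K + g (S K)))
     ((sum_n f K - sum_n g K) + (f (S K) - g (S K)))). ring. Qed.

Lemma C_eq (a b : C) : fst a = fst b -> snd a = snd b -> a = b.
Proof. intros; apply injective_projections; auto. Qed.

Section Poly.
Variable N : nat.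
Hypothesis HN : (2 <= N)%nat.
Variables (sig tau : nat -> nat) (c : nat -> R).
Hypothesis Hsig : forall l, (l < N)%nat -> (sig l < N)%nat.
Hypothesis Htau : forall k, (k < N)%nat -> (tau k < N)%nat.
Hypothesis Hst : forall k, (k < N)%nat -> sig (tau k) = k.
Hypothesis Hts : forall l, (l < N)%nat -> tau (sig l) = l.
Hypothesis Hc : forall l, (0 < c l)%R.

Definition ang (k : nat) : R := (INR k * PI / INR N)%R.
Definition h (l : nat) : C := RtoC (c l) * cis (ang (sig l)).
Definition u (k : nat) : C := RtoC (c (tau k)) * cis (ang k).

Definition Zh (z : C) : Prop := exists t : nat -> R, (forall l, (l < N)%nat -> -1 <= t l <= 1)%R /\
  z = sum_n (fun l => RtoC (t l) * h l) (N - 1).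

Definition sg (i l : nat) : R :=
  if (i <? N)%nat then (if (sig l <? i)%nat then 1 else -1)%R
  else (if (sig l <? i - N)%nat then -1 else 1)%R.

Definition vb (i : nat) : C := sum_n (fun l => RtoC (sg i l) * h l) (N - 1).
Definition E (i : nat) : C := if (i <? N)%nat then RtoC 2 * u i else - (RtoC 2 * u (i - N)).

Lemma INR_N_pos : (0 < INR N)%R.
Proof. apply lt_0_INR. lia. Qed.

Lemma sin_ang_pos a b : (a < b)%nat -> (b < N)%nat -> (0 < sin (ang b - ang a))%R.
Proof. intros. pose proof INR_N_pos. pose proof PI_RGT_0. apply sin_gt_0.
 - unfold ang. replace (INR b * PI / INR N - INR a * PI / INR N)%R with ((INR b - INR a) * PI / INR N)%R by (field; lra).
   apply Rdiv_lt_0_compat; auto. apply Rmult_lt_0_compat; auto. apply lt_INR in H. lra.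
 - unfold ang. replace (INR b * PI / INR N - INR a * PI / INR N)%R with ((INR b - INR a) * PI / INR N)%R by (field; lra).
   apply Rmult_lt_reg_r with (INR N); auto. unfold Rdiv. rewrite Rmult_assoc, Rinv_l by lra.
   apply lt_INR in H0. pose proof (pos_INR a). nra.
Qed.

Lemma cr_u_h k l : cr (u k) (h l) = (c (tau k) * c l * sin (ang (sig l) - ang k))%R.
Proof. unfold cr, u, h, cis. simpl. rewrite sin_minus. ring. Qed.

Lemma term_nonneg i l t : (i < N)%nat -> (l < N)%nat -> (-1 <= t <= 1)%R ->
  (0 <= (t - sg i l) * cr (u i) (h l))%R.
Proof. intros Hi Hl Ht. rewrite cr_u_h. pose proof (Hc (tau i)). pose proof (Hc l).
 pose proof (Hsig l Hl). unfold sg. destruct (Nat.ltb_spec i N); [|lia].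
 destruct (Nat.ltb_spec (sig l) i).
 - pose proof (sin_ang_pos (sig l) i H3 Hi).
   replace (sin (ang (sig l) - ang i)) with (- sin (ang i - ang (sig l)))%R
     by (rewrite <- sin_neg; f_equal; ring).
   assert (0 < c (tau i) * c l)%R by nra.
   replace ((t - 1) * (c (tau i) * c l * - sin (ang i - ang (sig l))))%R with
     ((1 - t) * ((c (tau i) * c l) * sin (ang i - ang (sig l))))%R by ring.
   apply Rmult_le_pos; [lra| apply Rmult_le_pos; lra].
 - destruct (Nat.eq_dec (sig l) i).
   + rewrite e, Rminus_diag, sin_0. lra.
   + assert (i < sig l)%nat by lia. pose proof (sin_ang_pos i (sig l) H4 H1).
     assert (0 < c (tau i) * c l)%R by nra.
     replace ((t - -1) * (c (tau i) * c l * sin (ang (sig l) - ang i)))%R with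
       ((t + 1) * ((c (tau i) * c l) * sin (ang (sig l) - ang i)))%R by ring.
     apply Rmult_le_pos; [lra| apply Rmult_le_pos; lra].
Qed.

Lemma term_pos i l : (i < N)%nat -> (l < N)%nat -> sig l <> i ->
  (0 < (0 - sg i l) * cr (u i) (h l))%R.
Proof. intros Hi Hl Hne. rewrite cr_u_h. pose proof (Hc (tau i)). pose proof (Hc l).
 pose proof (Hsig l Hl). unfold sg. destruct (Nat.ltb_spec i N); [|lia].
 assert (0 < c (tau i) * c l)%R by nra.
 destruct (Nat.ltb_spec (sig l) i).
 - pose proof (sin_ang_pos (sig l) i H4 Hi).
   replace (sin (ang (sig l) - ang i)) with (- sin (ang i - ang (sig l)))%R
     by (rewrite <- sin_neg; f_equal; ring).
   replace ((0 - 1) * (c (tau i) * c l * - sin (ang i - ang (sig l))))%R with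
     ((c (tau i) * c l) * sin (ang i - ang (sig l)))%R by ring.
   apply Rmult_lt_0_compat; lra.
 - assert (i < sig l)%nat by lia. pose proof (sin_ang_pos i (sig l) H5 H1).
   replace ((0 - -1) * (c (tau i) * c l * sin (ang (sig l) - ang i)))%R with
     ((c (tau i) * c l) * sin (ang (sig l) - ang i))%R by ring.
   apply Rmult_lt_0_compat; lra.
Qed.

Lemma sg_shift i l : (i < N)%nat -> sg (i + N) l = (- sg i l)%R.
Proof. intros Hi. unfold sg. destruct (Nat.ltb_spec (i + N) N); [lia|].
 destruct (Nat.ltb_spec i N); [|lia]. replace (i + N - N)%nat with i by lia.
 destruct (sig l <? i)%nat; lra. Qed.

Lemma sg_pm i l : (sg i l = 1 \/ sg i l = -1)%R.
Proof. unfold sg. destruct (i <? N)%nat, (sig l <? i)%nat, (sig l <? i - N)%nat; auto. Qed.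

Lemma vb_shift i : (i < N)%nat -> vb (i + N) = - vb i.
Proof. intros Hi. unfold vb.
 replace (- sum_n (fun l : nat => sg i l * h l) (N - 1)) with (-1 * sum_n (fun l : nat => sg i l * h l) (N - 1)) by ring.
 rewrite <- Csum_mult_l. apply sum_n_ext. intros l. rewrite sg_shift by auto.
 rewrite RtoC_opp. Cring. Qed.

Ltac sgcase := unfold sg; repeat match goal with |- context [Nat.ltb ?a ?b] => destruct (Nat.ltb_spec a b) end; try lia; try lra.

Lemma vb_2N : vb (2 * N) = vb 0.
Proof. unfold vb. apply sum_n_ext_loc. intros l Hl. assert (sig l < N)%nat by (apply Hsig; lia).
 f_equal. f_equal. sgcase. Qed.

Lemma h_tau k : (k < N)%nat -> h (tau k) = u k.
Proof. intros. unfold h, u. rewrite Hst; auto. Qed.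

Lemma sum_term_zero (f : nat -> C) K : (forall l, (l <= K)%nat -> f l = RtoC 0) -> sum_n f K = RtoC 0.
Proof. intros. apply (sum_zero (G:=C_AbelianMonoid)). auto. Qed.

Lemma vb_sub i : (i < 2 * N)%nat -> vb (S i) - vb i = E i.
Proof. intros Hi. unfold vb. rewrite Csum_minus. unfold E.
 destruct (Nat.ltb_spec i N).
 - rewrite (sum_single _ _ (tau i)).
   + rewrite h_tau by auto. assert (Hs : sig (tau i) = i) by auto.
     assert (sg (S i) (tau i) = 1%R) by (sgcase). assert (sg i (tau i) = (-1)%R) by (sgcase).
     rewrite H0, H1. Cring.
   + pose proof (Htau i H). lia.
   + intros l Hl Hne. assert (sig l < N)%nat by (apply Hsig; lia).
     assert (sig l <> i) by (intro; apply Hne; rewrite <- H1; symmetry; apply Hts; lia).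
     assert (sg (S i) l = sg i l) by sgcase. rewrite H2. change (@eq C (RtoC (sg i l) * h l - RtoC (sg i l) * h l) 0). ring.
 - assert (Hk : (i - N < N)%nat) by lia.
   rewrite (sum_single _ _ (tau (i - N))).
   + rewrite h_tau by auto. assert (Hs : sig (tau (i - N)) = (i - N)%nat) by auto.
     assert (sg (S i) (tau (i - N)) = (-1)%R) by (sgcase). assert (sg i (tau (i - N)) = 1%R) by (sgcase).
     rewrite H0, H1. Cring.
   + pose proof (Htau _ Hk). lia.
   + intros l Hl Hne. assert (sig l < N)%nat by (apply Hsig; lia).
     assert (sig l <> (i - N)%nat) by (intro; apply Hne; rewrite <- H1; symmetry; apply Hts; lia).
     assert (sg (S i) l = sg i l) by sgcase. rewrite H2. change (@eq C (RtoC (sg i l) * h l - RtoC (sg i l) * h l) 0). ring.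
Qed.

Lemma cr_E_decomp i t : (i < N)%nat ->
  cr (E i) (sum_n (fun l => RtoC (t l) * h l) (N - 1) - vb i) =
  sum_n (fun l => 2 * ((t l - sg i l) * cr (u i) (h l)))%R (N - 1).
Proof. intros Hi. unfold vb. rewrite Csum_minus, cr_sum. apply sum_n_ext. intros l.
 unfold E. destruct (Nat.ltb_spec i N); [|lia]. unfold cr; simpl; ring. Qed.

Lemma sum_nonneg (f : nat -> R) K : (forall l, (l <= K)%nat -> 0 <= f l)%R -> (0 <= sum_n f K)%R.
Proof. intros. assert (E0: sum_n (fun _ : nat => 0%R) K = 0%R) by (apply (sum_zero (G:=R_AbelianMonoid)); auto).
 rewrite <- E0. apply sum_le. auto. Qed.

Definition Hs (z : C) : Prop := forall i, (i < 2 * N)%nat -> (0 <= cr (E i) (z - vb i))%R.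

Lemma vb_hi i : (N <= i < 2 * N)%nat -> vb i = - vb (i - N).
Proof. intros. replace i with ((i - N) + N)%nat at 1 by lia. apply vb_shift. lia. Qed.

Lemma E_hi i : (N <= i < 2 * N)%nat -> E i = - E (i - N).
Proof. intros. unfold E. destruct (Nat.ltb_spec i N); [lia|]. destruct (Nat.ltb_spec (i - N) N); [|lia]. auto. Qed.

Lemma Zh_H z : Zh z -> Hs z.
Proof. intros [t [Ht ->]] i Hi. destruct (Nat.ltb_spec i N).
 - rewrite cr_E_decomp by auto. apply sum_nonneg. intros l Hl.
   pose proof (term_nonneg i l (t l) H ltac:(lia) (Ht l ltac:(lia))). lra.
 - rewrite vb_hi, E_hi by lia.
   replace (cr (- E (i - N)) (sum_n (fun l : nat => t l * h l) (N - 1) - - vb (i - N)))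
     with (cr (E (i - N)) (sum_n (fun l : nat => RtoC (- t l) * h l) (N - 1) - vb (i - N))).
   + rewrite cr_E_decomp by lia. apply sum_nonneg. intros l Hl.
     assert (-1 <= - t l <= 1)%R by (pose proof (Ht l ltac:(lia)); lra).
     pose proof (term_nonneg (i - N) l (- t l) ltac:(lia) ltac:(lia) H0). lra.
   + replace (sum_n (fun l : nat => RtoC (- t l) * h l) (N - 1)) with (- sum_n (fun l : nat => t l * h l) (N - 1)).
     * unfold cr; simpl; ring.
     * replace (- sum_n (fun l : nat => t l * h l) (N - 1)) with (-1 * sum_n (fun l : nat => t l * h l) (N - 1)) by ring.
       rewrite <- Csum_mult_l. apply sum_n_ext. intros l. rewrite RtoC_opp. Cring.
Qed.

Lemma cr_vb_E i : (i < 2 * N)%nat -> (0 < cr (vb i) (E i))%R.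
Proof. intros Hi.
 assert (Hlo : forall j, (j < N)%nat -> (0 < cr (vb j) (E j))%R).
 { intros j Hj. replace (cr (vb j) (E j)) with (cr (E j) (sum_n (fun l => RtoC ((fun _ => 0%R) l) * h l) (N - 1) - vb j)).
   - rewrite cr_E_decomp by auto.
     set (k := if (j =? 0)%nat then 1%nat else 0%nat).
     assert (Hk : (k < N)%nat /\ k <> j) by (unfold k; destruct (Nat.eqb_spec j 0); lia).
     destruct Hk as [Hk1 Hk2]. pose proof (Htau k Hk1).
     eapply Rlt_le_trans; [| apply (sum_ge_term _ _ (tau k)); [lia|] ].
     + pose proof (term_pos j (tau k) Hj H ltac:(rewrite Hst; auto)). lra.
     + intros l Hl. pose proof (term_nonneg j l 0 Hj ltac:(lia) ltac:(lra)). lra.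
   - rewrite sum_term_zero. unfold cr; simpl; ring. intros; Cring. }
 destruct (Nat.ltb_spec i N); auto.
 rewrite vb_hi, E_hi by lia. replace (cr (- vb (i - N)) (- E (i - N))) with (cr (vb (i - N)) (E (i - N))) by (unfold cr; simpl; ring).
 apply Hlo. lia.
Qed.

Definition v (j : nat) : C := vb (j mod (2 * N)).

Lemma v_small j : (j < 2 * N)%nat -> v j = vb j.
Proof. intros. unfold v. rewrite Nat.mod_small; auto. Qed.

Definition ind (p : nat) (x : R) (j : nat) : R := if (j =? p)%nat then x else 0%R.

Lemma Rsum_ind p x K : (p <= K)%nat -> sum_n (ind p x) K = x.
Proof. intros. rewrite (sum_single _ _ p); auto.
 - unfold ind. rewrite Nat.eqb_refl. auto.
 - intros l _ Hl. unfold ind. destruct (Nat.eqb_spec l p); [lia| auto]. Qed.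

Lemma Csum_ind p x (f : nat -> C) K : (p <= K)%nat ->
  sum_n (fun j => RtoC (ind p x j) * f j) K = RtoC x * f p.
Proof. intros. rewrite (sum_single _ _ p); auto.
 - unfold ind. rewrite Nat.eqb_refl. auto.
 - intros l _ Hl. unfold ind. destruct (Nat.eqb_spec l p); [lia| ]. change (@eq C (RtoC 0 * f l) 0). ring. Qed.

Lemma cramer x y z : cr x y <> 0%R ->
  z = RtoC (cr z y / cr x y) * x + RtoC (cr x z / cr x y) * y.
Proof. intros H. unfold cr in *. apply C_eq; simpl; field; auto. Qed.

Lemma cr_tri x y z : cr x y <> 0%R ->
  cr (y - x) (z - x) = (cr x y * (1 - cr z y / cr x y - cr x z / cr x y))%R.
Proof. intros H. unfold cr in *. simpl. field. auto. Qed.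

Lemma H_conv z : Hs z -> conv_hull (2 * N) v z.
Proof.
  intros Hz. set (g := fun i => cr (vb i) z).
  assert (Hex : exists i, (i < 2 * N)%nat /\ (0 <= g i)%R /\ (g (S i) <= 0)%R).
  { assert (gN : g N = (- g 0%nat)%R). { unfold g. replace N with (0 + N)%nat at 1 by lia. rewrite vb_shift by lia. unfold cr; simpl; ring. }
    assert (g2N : g (2 * N)%nat = g 0%nat). { unfold g. rewrite vb_2N. auto. }
    destruct (Rle_dec 0 (g 0%nat%nat)).
    - destruct (disc_ivt g 0%nat N) as [i [Hi1 Hi2]]; [lia| auto| lra|]. exists i; split; [lia| auto].
    - destruct (disc_ivt g N (2 * N)) as [i [Hi1 Hi2]]; [lia| lra| lra|]. exists i; split; [lia| auto]. }
  destruct Hex as [i [Hi [Hg1 Hg2]]].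
  assert (HvS : vb (S i) = vb i + E i) by (rewrite <- (vb_sub i Hi); Cring).
  set (D := cr (vb i) (vb (S i))).
  assert (HD : (0 < D)%R). { unfold D. rewrite HvS. replace (cr (vb i) (vb i + E i)) with (cr (vb i) (E i)) by (unfold cr; simpl; ring). apply cr_vb_E; auto. }
  set (a := (cr z (vb (S i)) / D)%R). set (b := (g i / D)%R).
  assert (Ha : (0 <= a)%R). { unfold a. apply Rmult_le_pos; [| left; apply Rinv_0_lt_compat; auto].
    unfold g in Hg2. replace (cr z (vb (S i))) with (- cr (vb (S i)) z)%R by (unfold cr; ring). lra. }
  assert (Hb : (0 <= b)%R). { unfold b. apply Rmult_le_pos; [auto| left; apply Rinv_0_lt_compat; auto]. }
  assert (Hzab : z = RtoC a * vb i + RtoC b * vb (S i)) by (apply cramer; change (D <> 0%R); lra).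
  assert (Hab : (a + b <= 1)%R).
  { pose proof (Hz i Hi) as Hzi. rewrite <- vb_sub in Hzi by auto.
    assert (Eq : cr (vb (S i) - vb i) (z - vb i) = (D * (1 - a - b))%R).
    { unfold a, b, g, D. apply cr_tri. fold D; lra. }
    rewrite Eq in Hzi. nra. }
  set (e := ((1 - a - b) / 2)%R).
  set (i1 := if (S i <? 2 * N)%nat then S i else 0%nat).
  assert (Hi1 : (i1 < 2 * N)%nat) by (unfold i1; destruct (Nat.ltb_spec (S i) (2 * N)); lia).
  assert (Hvi1 : vb i1 = vb (S i)). { unfold i1; destruct (Nat.ltb_spec (S i) (2 * N)); auto.
    replace (S i) with (2 * N)%nat by lia. rewrite vb_2N. auto. }
  exists (fun j => ind i a j + ind i1 b j + ind 0 e j + ind N e j)%R.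
  split; [| split].
  - intros j _. unfold ind. destruct (j =? i)%nat, (j =? i1)%nat, (j =? 0)%nat, (j =? N)%nat; unfold e; lra.
  - rewrite !Rsum_plus, !Rsum_ind by lia. unfold e; lra.
  - rewrite (sum_n_ext_loc _ (fun j => (RtoC (ind i a j) * vb j + RtoC (ind i1 b j) * vb j) +
        (RtoC (ind 0 e j) * vb j + RtoC (ind N e j) * vb j))).
    + rewrite !Csum_plus, !Csum_ind by lia. rewrite Hvi1.
      replace (vb N) with (- vb 0) by (replace N with (0 + N)%nat at 1 by lia; rewrite vb_shift by lia; auto).
      rewrite Hzab at 1. Cring.
    + intros j Hj. rewrite v_small by lia. rewrite !RtoC_plus. Cring.
Qed.

Lemma conv_Zh z : conv_hull (2 * N) v z -> Zh z.
Proof.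
  intros [w [Hw [Hs1 Hz]]]. change (sum_n (fun j => w j) (2 * N - 1)) with (sum_n w (2 * N - 1)) in Hs1.
  exists (fun l => sum_n (fun j => w j * sg j l)%R (2 * N - 1)). split.
  - intros l Hl. split.
    + replace (-1)%R with (sum_n (fun j => - w j)%R (2 * N - 1)).
      * apply sum_le. intros j Hj. pose proof (Hw j ltac:(lia)). destruct (sg_pm j l) as [-> | ->]; lra.
      * rewrite (sum_n_ext _ (fun j => (-1) * w j)%R) by (intros; match goal with |- ?a = ?b => change (@eq R a b) end; ring). rewrite Rsum_mult_l, Hs1. match goal with |- ?a = ?b => change (@eq R a b) end; ring.
    + rewrite <- Hs1. apply sum_le. intros j Hj. pose proof (Hw j ltac:(lia)). destruct (sg_pm j l) as [-> | ->]; lra.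
  - rewrite Hz. rewrite (sum_n_ext_loc _ (fun j => sum_n (fun l => RtoC (w j * sg j l) * h l) (N - 1))).
    + rewrite (sum_n_switch (G:=C_AbelianMonoid)). apply sum_n_ext. intros l.
      rewrite <- Csum_RtoC. apply sum_n_ext. auto.
    + intros j Hj. rewrite v_small by lia. unfold vb. rewrite <- Csum_mult_l. apply sum_n_ext.
      intros l. rewrite RtoC_mult. Cring.
Qed.

Lemma Zh_closed (f : nat -> C) z : @is_series C_AbsRing C_NormedModule f z ->
  (forall k, Zh (sum_n f k)) -> Zh z.
Proof. intros Hsr Hk. apply conv_Zh, H_conv. intros i Hi.
 apply (lim_cr f z (E i) (vb i) Hsr). intros k. apply (Zh_H _ (Hk k) i Hi). Qed.

Lemma Zh_conv z : Zh z <-> conv_hull (2 * N) v z.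
Proof. split; [intros; apply H_conv, Zh_H; auto| apply conv_Zh]. Qed.

Lemma v_period j : v (j + 2 * N) = v j.
Proof. unfold v. replace (j + 2 * N)%nat with (j + 1 * (2 * N))%nat by lia. rewrite Nat.Div0.mod_add. auto. Qed.

Lemma mod_S j : (S j mod (2 * N) = if (S (j mod (2 * N)) <? 2 * N) then S (j mod (2 * N)) else 0)%nat.
Proof. assert (Hpos : (2 * N <> 0)%nat) by lia.
 pose proof (Nat.div_mod_eq j (2 * N)). pose proof (Nat.mod_upper_bound j (2 * N) Hpos).
 set (q := (j mod (2 * N))%nat) in *. set (d := (j / (2 * N))%nat) in *.
 replace (S j) with (S q + d * (2 * N))%nat by lia. rewrite Nat.Div0.mod_add.
 destruct (Nat.ltb_spec (S q) (2 * N)).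
 - apply Nat.mod_small; auto.
 - replace (S q) with (2 * N)%nat by lia. apply Nat.Div0.mod_same. Qed.

Lemma vS j : v (S j) = vb (S (j mod (2 * N))).
Proof. unfold v. rewrite mod_S. assert (Hpos : (2 * N <> 0)%nat) by lia.
 pose proof (Nat.mod_upper_bound j (2 * N) Hpos).
 destruct (Nat.ltb_spec (S (j mod (2 * N))) (2 * N)); auto.
 replace (S (j mod (2 * N))) with (2 * N)%nat by lia. rewrite vb_2N. auto. Qed.

Lemma edge j : v (S j) - v j = E (j mod (2 * N)).
Proof. rewrite vS. unfold v at 1. apply vb_sub. apply Nat.mod_upper_bound. lia. Qed.

Lemma u_nz k : u k <> RtoC 0.
Proof. intros H. unfold u, cis in H. pose proof (Hc (tau k)).
 assert (H1 : (c (tau k) * cos (ang k) = 0)%R) by (apply (f_equal fst) in H; simpl in H; lra).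
 assert (H2 : (c (tau k) * sin (ang k) = 0)%R) by (apply (f_equal snd) in H; simpl in H; lra).
 pose proof (sin2_cos2 (ang k)). unfold Rsqr in *.
 assert (cos (ang k) = 0%R) by (apply Rmult_eq_reg_l with (c (tau k)); lra).
 assert (sin (ang k) = 0%R) by (apply Rmult_eq_reg_l with (c (tau k)); lra).
 rewrite H4, H5 in H3. lra. Qed.

Lemma E_nz q : E q <> RtoC 0.
Proof. unfold E. destruct (q <? N)%nat; intro H; apply (f_equal Cmod) in H;
 rewrite ?Cmod_opp, Cmod_mult, Cmod_R, Cmod_0, Rabs_pos_eq in H by lra.
 - apply (u_nz q). apply Cmod_eq_0. lra.
 - apply (u_nz (q - N)). apply Cmod_eq_0. lra.
Qed.

Lemma u_next k : (S k < N)%nat ->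
  u (S k) = RtoC (c (tau (S k)) / c (tau k)) * cis (PI / INR N) * u k.
Proof. intros. pose proof (Hc (tau k)). pose proof INR_N_pos. unfold u, cis, ang.
 replace (INR (S k) * PI / INR N)%R with (PI / INR N + INR k * PI / INR N)%R by (rewrite S_INR; field; lra).
 apply C_eq; simpl; rewrite ?cos_plus, ?sin_plus; field; lra. Qed.

Lemma u_wrap : - u 0 = RtoC (c (tau 0%nat) / c (tau (N - 1)%nat)) * cis (PI / INR N) * u (N - 1).
Proof. pose proof (Hc (tau (N - 1)%nat)). pose proof INR_N_pos. unfold u.
 assert (Hc0 : (PI / INR N + ang (N - 1) = PI)%R) by (unfold ang; rewrite minus_INR by lia; simpl; field; lra).
 replace (RtoC (c (tau 0%nat) / c (tau (N - 1)%nat)) * cis (PI / INR N) * (RtoC (c (tau (N - 1)%nat)) * cis (ang (N - 1))))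
   with (RtoC (c (tau 0%nat) / c (tau (N - 1)%nat)) * RtoC (c (tau (N - 1)%nat)) * (cis (PI / INR N) * cis (ang (N - 1)))) by ring.
 rewrite cis_mult, Hc0. unfold cis, ang. simpl. rewrite Rmult_0_l, Rdiv_0_l, cos_0, sin_0, cos_PI, sin_PI.
 apply C_eq; simpl; field; lra.
Qed.

Lemma turn q : (q < 2 * N)%nat -> exists rho : R, (0 < rho)%R /\
  E (if (S q <? 2 * N)%nat then S q else 0%nat) = RtoC rho * cis (PI / INR N) * E q.
Proof. intros Hq. unfold E.
 destruct (Nat.ltb_spec (S q) (2 * N)).
 - destruct (Nat.ltb_spec (S q) N).
   + destruct (Nat.ltb_spec q N); [|lia].
     exists (c (tau (S q)) / c (tau q))%R. split; [apply Rdiv_lt_0_compat; auto|].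
     rewrite u_next by auto. Cring.
   + destruct (Nat.ltb_spec q N).
     * assert (q = N - 1)%nat by lia. subst q. replace (S (N - 1) - N)%nat with 0%nat by lia.
       exists (c (tau 0%nat) / c (tau (N - 1)%nat))%R. split; [apply Rdiv_lt_0_compat; auto|].
       replace (- (RtoC 2 * u 0)) with (RtoC 2 * (- u 0)) by Cring. rewrite u_wrap. Cring.
     * replace (S q - N)%nat with (S (q - N)) by lia.
       exists (c (tau (S (q - N))) / c (tau (q - N)))%R. split; [apply Rdiv_lt_0_compat; auto|].
       rewrite u_next by lia. Cring.
 - assert (q = 2 * N - 1)%nat by lia. subst q. destruct (Nat.ltb_spec 0 N); [|lia].
   destruct (Nat.ltb_spec (2 * N - 1) N); [lia|]. replace (2 * N - 1 - N)%nat with (N - 1)%nat by lia.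
   exists (c (tau 0%nat) / c (tau (N - 1)%nat))%R. split; [apply Rdiv_lt_0_compat; auto|].
   replace (RtoC 2 * u 0) with (- (RtoC 2) * (- u 0)) by Cring. rewrite u_wrap. Cring.
Qed.

Lemma Zh_polygon : is_polygon_all_angles Zh (2 * N) (PI - PI / INR N).
Proof. exists v. split; [| split; [| split]].
 - apply v_period.
 - intros j. rewrite edge. apply E_nz.
 - intros j. rewrite edge, edge. rewrite mod_S.
   replace (PI - (PI - PI / INR N))%R with (PI / INR N)%R by ring.
   apply turn. apply Nat.mod_upper_bound. lia.
 - apply Zh_conv.
Qed.

Lemma Zh_interior : nonempty_interior Zh.
Proof.
  assert (H01 : (1 < N)%nat) by lia.
  set (s := sin (ang 1)). set (co := cos (ang 1)).
  assert (Hs0 : (0 < s)%R). { unfold s. replace (ang 1) with (ang 1 - ang 0)%R by (unfold ang; simpl; field; pose proof INR_N_pos; lra). apply sin_ang_pos; lia. }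
  assert (Hco : (-1 <= co <= 1)%R) by apply COS_bound.
  assert (Hs1 : (s <= 1)%R) by (apply SIN_bound).
  set (c0 := c (tau 0%nat)). set (c1 := c (tau 1%nat)).
  assert (Hc0 : (0 < c0)%R) by apply Hc. assert (Hc1 : (0 < c1)%R) by apply Hc.
  set (eps := Rmin (c1 * s) (c0 * s / 2)).
  assert (He : (0 < eps)%R) by (apply Rmin_pos; nra).
  exists (RtoC 0), eps. split; auto. intros w Hw.
  pose proof (Rmax_Cmod (w - RtoC 0)) as Hm.
  assert (Hx : (Rabs (fst w) < eps)%R). { eapply Rle_lt_trans; [| apply Hw]. eapply Rle_trans; [| apply Hm]. simpl. rewrite !Ropp_0, !Rplus_0_r. apply Rmax_l. }
  assert (Hy : (Rabs (snd w) < eps)%R). { eapply Rle_lt_trans; [| apply Hw]. eapply Rle_trans; [| apply Hm]. simpl. rewrite !Ropp_0, !Rplus_0_r. apply Rmax_r. }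
  set (x := fst w) in *. set (y := snd w) in *.
  apply Rabs_def2 in Hx. apply Rabs_def2 in Hy.
  assert (He1 : (eps <= c1 * s)%R) by apply Rmin_l. assert (He2 : (eps <= c0 * s / 2)%R) by apply Rmin_r.
  set (tb := (y / (c1 * s))%R). set (ta := ((x - y * co / s) / c0)%R).
  assert (Htb : (-1 <= tb <= 1)%R).
  { unfold tb. split; [apply Rmult_le_reg_r with (c1 * s)%R; [nra|]| apply Rmult_le_reg_r with (c1 * s)%R; [nra|]];
    unfold Rdiv; rewrite Rmult_assoc, Rinv_l by nra; lra. }
  assert (Hyc : (- eps <= y * co <= eps)%R) by (split; nra).
  assert (Hyc2 : (- (c0 / 2) <= y * co / s <= c0 / 2)%R).
  { split; [apply Rmult_le_reg_r with s; [lra|]| apply Rmult_le_reg_r with s; [lra|]];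
    unfold Rdiv; rewrite Rmult_assoc, Rinv_l by lra; nra. }
  assert (Hx2 : (- (c0 / 2) <= x <= c0 / 2)%R) by (split; nra).
  assert (Hta : (-1 <= ta <= 1)%R).
  { unfold ta. split; [apply Rmult_le_reg_r with c0; [lra|]| apply Rmult_le_reg_r with c0; [lra|]];
    unfold Rdiv at 1; rewrite Rmult_assoc, Rinv_l by lra; lra. }
  assert (Hneq : tau 0%nat <> tau 1%nat).
  { intro Heq. assert (sig (tau 0%nat) = sig (tau 1%nat)) by (rewrite Heq; auto). rewrite !Hst in H by lia. lia. }
  assert (HT0 : (tau 0%nat < N)%nat) by (apply Htau; lia). assert (HT1 : (tau 1%nat < N)%nat) by (apply Htau; lia).
  exists (fun l => ind (tau 0%nat) ta l + ind (tau 1%nat) tb l)%R. split.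
  - intros l _. unfold ind. destruct (Nat.eqb_spec l (tau 0%nat)), (Nat.eqb_spec l (tau 1%nat)); try lia; lra.
  - rewrite (sum_n_ext _ (fun l => RtoC (ind (tau 0%nat) ta l) * h l + RtoC (ind (tau 1%nat) tb l) * h l))
      by (intros; rewrite RtoC_plus; Cring).
    rewrite Csum_plus, !Csum_ind by lia. rewrite !h_tau by lia.
    unfold u, cis. fold c0 c1. fold co. fold s.
    replace (ang 0) with 0%R by (unfold ang; simpl; field; pose proof INR_N_pos; lra).
    rewrite cos_0, sin_0. unfold ta, tb.
    apply C_eq; simpl; fold x y; field; lra.
Qed.

End Poly.



Lemma cis_pow a n : Cpow (cis a) n = cis (INR n * a).
Proof. induction n.
 - simpl. unfold cis. rewrite Rmult_0_l, cos_0, sin_0. auto.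
 - simpl Cpow. rewrite IHn, cis_mult. f_equal. rewrite S_INR. ring. Qed.

Lemma Cpow_mult (a b : C) n : Cpow (a * b) n = Cpow a n * Cpow b n.
Proof. induction n; simpl; [ring| rewrite IHn; ring]. Qed.

Lemma RtoC_pow (x : R) n : Cpow (RtoC x) n = RtoC (x ^ n).
Proof. induction n; simpl; auto. rewrite IHn. rewrite RtoC_mult. auto. Qed.

Lemma sin_kPI k : sin (IZR k * PI) = 0%R.
Proof. apply sin_eq_0_1. eauto. Qed.

Lemma cos_kPI_sq k : (cos (IZR k * PI) * cos (IZR k * PI) = 1)%R.
Proof. pose proof (sin2_cos2 (IZR k * PI)). rewrite sin_kPI in H. unfold Rsqr in H. lra. Qed.

Lemma cis_kPI k x : cis (IZR k * PI + x) = RtoC (cos (IZR k * PI)) * cis x.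
Proof. rewrite <- cis_mult. unfold cis at 1. rewrite sin_kPI. auto. Qed.

Section Conc.
Variable N : nat.
Hypothesis HN : (2 <= N)%nat.
Variables (M us vs : Z).
Hypothesis HB : (us * M + vs * Z.of_nat N = 1)%Z.

Definition NZ := Z.of_nat N.
Lemma NZ_pos : (0 < NZ)%Z. Proof. unfold NZ. lia. Qed.

Definition sigc (l : nat) : nat := Z.to_nat ((Z.of_nat l * M) mod NZ).
Definition tauc (k : nat) : nat := Z.to_nat ((Z.of_nat k * us) mod NZ).
Definition epsc (l : nat) : R := cos (IZR ((Z.of_nat l * M) / NZ) * PI).

Lemma sigc_lt l : (sigc l < N)%nat.
Proof. unfold sigc. pose proof (Z.mod_pos_bound (Z.of_nat l * M) NZ NZ_pos). unfold NZ in *. lia. Qed.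
Lemma tauc_lt k : (tauc k < N)%nat.
Proof. unfold tauc. pose proof (Z.mod_pos_bound (Z.of_nat k * us) NZ NZ_pos). unfold NZ in *. lia. Qed.


Lemma sigc_tauc k : (k < N)%nat -> sigc (tauc k) = k.
Proof. intros Hk. unfold sigc, tauc. pose proof (Z.mod_pos_bound (Z.of_nat k * us) NZ NZ_pos).
 rewrite Z2Nat.id by lia. rewrite Z.mul_mod_idemp_l by (pose proof NZ_pos; lia).
 replace (Z.of_nat k * us * M)%Z with (Z.of_nat k + (- (Z.of_nat k * vs)) * NZ)%Z
   by (unfold NZ in *; nia).
 rewrite Z.mod_add by (pose proof NZ_pos; lia). rewrite Z.mod_small by (unfold NZ; lia). lia. Qed.

Lemma tauc_sigc l : (l < N)%nat -> tauc (sigc l) = l.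
Proof. intros Hl. unfold sigc, tauc. pose proof (Z.mod_pos_bound (Z.of_nat l * M) NZ NZ_pos).
 rewrite Z2Nat.id by lia. rewrite Z.mul_mod_idemp_l by (pose proof NZ_pos; lia).
 replace (Z.of_nat l * M * us)%Z with (Z.of_nat l + (- (Z.of_nat l * vs)) * NZ)%Z
   by (unfold NZ in *; nia).
 rewrite Z.mod_add by (pose proof NZ_pos; lia). rewrite Z.mod_small by (unfold NZ; lia). lia. Qed.

Lemma epsc_sq l : (epsc l * epsc l = 1)%R.
Proof. apply cos_kPI_sq. Qed.

Lemma cis_decomp l : cis (INR l * (PI * IZR M / INR N)) = RtoC (epsc l) * cis (ang N (sigc l)).
Proof. unfold epsc, ang, sigc. pose proof (Z.mod_pos_bound (Z.of_nat l * M) NZ NZ_pos).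
 pose proof (Z.div_mod (Z.of_nat l * M) NZ ltac:(pose proof NZ_pos; lia)).
 set (q := ((Z.of_nat l * M) / NZ)%Z) in *. set (k := ((Z.of_nat l * M) mod NZ)%Z) in *.
 assert (HNR : (0 < INR N)%R) by (apply lt_0_INR; lia).
 rewrite <- cis_kPI. f_equal.
 rewrite INR_IZR_INZ with (n := Z.to_nat k). rewrite Z2Nat.id by lia.
 assert (IZR (Z.of_nat l) * IZR M = IZR NZ * IZR q + IZR k)%R.
 { rewrite <- !mult_IZR, <- plus_IZR. f_equal. lia. }
 unfold NZ in H1. rewrite <- INR_IZR_INZ in H1. rewrite INR_IZR_INZ.
 apply Rmult_eq_reg_r with (INR N); [| lra]. field_simplify; [| lra| lra].
 rewrite <- INR_IZR_INZ in *. nra.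
Qed.

Variable r : R.
Hypothesis Hr : (Rpower 2 (- / INR N) <= r < 1)%R.

Definition lam : C := RtoC r * cis (PI * IZR M / INR N).

Lemma INRN_pos : (0 < INR N)%R. Proof. apply lt_0_INR; lia. Qed.

Lemma r_pos : (0 < r)%R.
Proof. eapply Rlt_le_trans; [| apply Hr]. unfold Rpower. apply exp_pos. Qed.

Lemma rN_half : (/ 2 <= r ^ N)%R.
Proof. pose proof INRN_pos.
 assert (E1 : (Rpower 2 (- / INR N) ^ N = / 2)%R).
 { rewrite <- Rpower_pow by (unfold Rpower; apply exp_pos). rewrite Rpower_mult.
   replace (- / INR N * INR N)%R with (- (1))%R by (field; lra). rewrite Rpower_Ropp, Rpower_1 by lra. auto. }
 rewrite <- E1. apply pow_incr. split; [unfold Rpower; left; apply exp_pos| apply Hr]. Qed.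

Lemma rl_le1 l : (r ^ l <= 1)%R.
Proof. pose proof r_pos. pose proof (pow_incr r 1 l ltac:(lra)). rewrite pow1 in H0. auto. Qed.

Lemma lam_pow l : Cpow lam l = RtoC (r ^ l * epsc l) * cis (ang N (sigc l)).
Proof. unfold lam. rewrite Cpow_mult, RtoC_pow, cis_pow, cis_decomp. rewrite RtoC_mult. ring. Qed.

Lemma Cmod_cis a : Cmod (cis a) = 1%R.
Proof. unfold Cmod, cis. simpl. pose proof (sin2_cos2 a). unfold Rsqr in H.
 replace (cos a * (cos a * 1) + sin a * (sin a * 1))%R with 1%R by lra. apply sqrt_1. Qed.

Lemma Cmod_lam_pow l : Cmod (Cpow lam l) = (r ^ l)%R.
Proof. rewrite lam_pow, Cmod_mult, Cmod_cis, Cmod_R, Rabs_mult.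
 pose proof (epsc_sq l). assert (Rabs (epsc l) = 1%R).
 { destruct (Rle_dec 0 (epsc l)); [rewrite Rabs_pos_eq by lra| rewrite Rabs_left by lra]; nra. }
 rewrite H0, Rabs_pos_eq; [ring| apply pow_le; pose proof r_pos; lra]. Qed.

Definition rho : R := (r ^ N * cos (IZR M * PI))%R.

Lemma lam_N : Cpow lam N = RtoC rho.
Proof. unfold lam, rho. rewrite Cpow_mult, RtoC_pow, cis_pow.
 replace (INR N * (PI * IZR M / INR N))%R with (IZR M * PI + 0)%R by (pose proof INRN_pos; field; lra).
 rewrite cis_kPI. unfold cis. rewrite cos_0, sin_0. apply C_eq; simpl; ring. Qed.

Lemma abs_rho : Rabs rho = (r ^ N)%R.
Proof. unfold rho. rewrite Rabs_mult. pose proof (cos_kPI_sq M). assert (Rabs (cos (IZR M * PI)) = 1%R).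
 { destruct (Rle_dec 0 (cos (IZR M * PI))); [rewrite Rabs_pos_eq by lra| rewrite Rabs_left by lra]; nra. }
 rewrite H0, Rabs_pos_eq; [ring| apply pow_le; pose proof r_pos; lra]. Qed.

Lemma rN_lt1 : (r ^ N < 1)%R.
Proof. pose proof r_pos. apply (pow_lt_1_compat r N); [lra| lia]. Qed.

Definition Rr : R := (/ (1 - Rabs rho))%R.

Lemma Rr_facts : (2 <= Rr /\ Rabs rho * Rr = Rr - 1 /\ 0 < Rabs rho)%R.
Proof. pose proof rN_half. pose proof rN_lt1. rewrite <- abs_rho in *. unfold Rr.
 split; [| split; [field; lra| lra]].
 replace 2%R with (/ (/ 2))%R by field. apply Rinv_le_contravar; lra. Qed.

Definition cc (l : nat) : R := (Rr * r ^ l)%R.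
Lemma cc_pos l : (0 < cc l)%R.
Proof. unfold cc. pose proof Rr_facts. pose proof r_pos. apply Rmult_lt_0_compat; [lra| apply pow_lt; lra]. Qed.

Definition P (t : nat -> R) : C := sum_n (fun l => RtoC (t l) * Cpow lam l) (N - 1).
Definition Bd (t : nat -> R) : Prop := forall l, (l < N)%nat -> (- Rr <= t l <= Rr)%R.
Definition Zset (z : C) : Prop := exists t, Bd t /\ z = P t.

Lemma Zset_Zh z : Zset z <-> Zh N sigc cc z.
Proof. pose proof Rr_facts. split.
 - intros [t [Hb ->]]. exists (fun l => t l * epsc l / Rr)%R. split.
   + intros l Hl. pose proof (Hb l Hl). pose proof (epsc_sq l).
     assert (- Rr <= t l * epsc l <= Rr)%R.
     { assert ((t l * epsc l) * (t l * epsc l) <= Rr * Rr)%R.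
       { replace ((t l * epsc l) * (t l * epsc l))%R with (t l * t l * (epsc l * epsc l))%R by ring.
         rewrite H1. nra. }
       split; nra. }
     split; [apply Rmult_le_reg_r with Rr; [lra|]| apply Rmult_le_reg_r with Rr; [lra|]];
       unfold Rdiv; rewrite Rmult_assoc, Rinv_l by lra; lra.
   + unfold P. apply sum_n_ext. intros l. rewrite lam_pow. unfold h, cc.
     apply C_eq; simpl; field; lra.
 - intros [t [Hb ->]]. exists (fun l => t l * epsc l * Rr)%R. split.
   + intros l Hl. pose proof (Hb l Hl). pose proof (epsc_sq l).
     assert (- 1 <= epsc l <= 1)%R by (split; nra).
     assert (- 1 <= t l * epsc l <= 1)%R by (split; nra).
     split; nra.
   + unfold P. apply sum_n_ext. intros l. rewrite lam_pow. unfold h, cc.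
     rewrite !RtoC_mult.
     replace (RtoC (t l) * RtoC (epsc l) * RtoC Rr * (RtoC (r ^ l) * RtoC (epsc l) * cis (ang N (sigc l))))
       with (RtoC (t l) * RtoC Rr * RtoC (r ^ l) * (RtoC (epsc l * epsc l)) * cis (ang N (sigc l))) by (rewrite RtoC_mult; ring).
     rewrite epsc_sq. Cring.
Qed.

Definition sgn (x : R) : R := if Rle_dec 0 x then 1%R else (-1)%R.
Definition step (t : nat -> R) : nat -> R :=
  fun l => if (l <? N - 1)%nat then t (S l) else ((t 0%nat - sgn (t 0%nat)) / rho)%R.

Lemma rho_nz : rho <> 0%R.
Proof. pose proof Rr_facts. intro H0. rewrite H0, Rabs_R0 in H. lra. Qed.

Lemma step_bd t : Bd t -> Bd (step t).
Proof. intros Hb l Hl. unfold step. destruct (Nat.ltb_spec l (N - 1)).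
 - apply Hb. lia.
 - pose proof Rr_facts as [H1 [H2 H3]]. pose proof (Hb 0%nat ltac:(lia)).
   set (x := (t 0%nat - sgn (t 0%nat))%R).
   assert (Hx : (Rabs x <= Rabs rho * Rr)%R).
   { rewrite H2. unfold x, sgn. destruct (Rle_dec 0 (t 0%nat)); apply Rabs_le; lra. }
   assert (Rabs (x / rho) <= Rr)%R.
   { unfold Rdiv. rewrite Rabs_mult, Rabs_inv. apply Rmult_le_reg_r with (Rabs rho); [lra|].
     rewrite Rmult_assoc, Rinv_l by lra. lra. }
   apply Rabs_le_between. auto.
Qed.

Lemma Cpow_S (x : C) n : Cpow x (S n) = x * Cpow x n.
Proof. reflexivity. Qed.

Lemma P_step t : P t = RtoC (sgn (t 0%nat)) + lam * P (step t).
Proof. unfold P. assert (HK : (N - 1 = S (N - 2))%nat) by lia. rewrite HK.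
 rewrite sum_shift, sum_Sn.
 rewrite (sum_n_ext_loc (fun l => RtoC (step t l) * Cpow lam l) (fun l => RtoC (t (S l)) * Cpow lam l)).
 2: { intros l Hl. unfold step. destruct (Nat.ltb_spec l (N - 1)); [auto| lia]. }
 assert (Hst : step t (S (N - 2)) = ((t 0%nat - sgn (t 0%nat)) / rho)%R).
 { unfold step. destruct (Nat.ltb_spec (S (N - 2)) (N - 1)); [lia| auto]. }
 rewrite Hst. clear Hst.
 assert (HN2 : Cpow lam (S (S (N - 2))) = RtoC rho) by (replace (S (S (N - 2))) with N by lia; apply lam_N).
 rewrite (sum_n_ext (fun l => RtoC (t (S l)) * Cpow lam (S l)) (fun l => lam * (RtoC (t (S l)) * Cpow lam l)))
   by (intros; rewrite Cpow_S; Cring).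
 rewrite Csum_mult_l. rewrite Cpow_S in HN2.
 change (plus (RtoC (t 0%nat) * Cpow lam 0) (lam * sum_n (fun l : nat => RtoC (t (S l)) * Cpow lam l) (N - 2)) =
   RtoC (sgn (t 0%nat)) + lam * (sum_n (fun l : nat => RtoC (t (S l)) * Cpow lam l) (N - 2) +
     RtoC ((t 0%nat - sgn (t 0%nat)) / rho) * Cpow lam (S (N - 2)))).
 simpl Cpow at 1.
 replace (lam * (sum_n (fun l : nat => RtoC (t (S l)) * Cpow lam l) (N - 2) +
     RtoC ((t 0%nat - sgn (t 0%nat)) / rho) * Cpow lam (S (N - 2))))
   with (lam * sum_n (fun l : nat => RtoC (t (S l)) * Cpow lam l) (N - 2) +
     RtoC ((t 0%nat - sgn (t 0%nat)) / rho) * (lam * Cpow lam (S (N - 2)))) by ring.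
 rewrite HN2. pose proof rho_nz.
 change (plus (RtoC (t 0%nat) * 1) (lam * sum_n (fun l : nat => RtoC (t (S l)) * Cpow lam l) (N - 2)))
   with (RtoC (t 0%nat) * 1 + lam * sum_n (fun l : nat => RtoC (t (S l)) * Cpow lam l) (N - 2)).
 set (SS := lam * sum_n (fun l : nat => RtoC (t (S l)) * Cpow lam l) (N - 2)).
 apply C_eq; simpl; field; auto.
Qed.

Definition st (t : nat -> R) (k : nat) : nat -> R := Nat.iter k step t.

Lemma P_iter t k : P t = sum_n (fun j => RtoC (sgn (st t j 0%nat)) * Cpow lam j) k + Cpow lam (S k) * P (st t (S k)).
Proof. induction k.
 - rewrite sum_O. rewrite P_step at 1. simpl. unfold st. simpl. ring.
 - rewrite IHk. rewrite sum_Sn. rewrite (P_step (st t (S k))).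
   change (st t (S (S k))) with (step (st t (S k))).
   change (@eq C (sum_n (fun j : nat => RtoC (sgn (st t j 0%nat)) * Cpow lam j) k +
      Cpow lam (S k) * (RtoC (sgn (st t (S k) 0%nat)) + lam * P (step (st t (S k)))))
    ((sum_n (fun j : nat => RtoC (sgn (st t j 0%nat)) * Cpow lam j) k +
      RtoC (sgn (st t (S k) 0%nat)) * Cpow lam (S k)) + Cpow lam (S (S k)) * P (step (st t (S k))))).
   rewrite (Cpow_S lam (S k)). ring.
Qed.

Lemma st_bd t k : Bd t -> Bd (st t k).
Proof. intros Hb. induction k; [auto| apply step_bd; auto]. Qed.

Lemma P_bound t : Bd t -> (Cmod (P t) <= INR N * Rr)%R.
Proof. intros Hb. unfold P. eapply Rle_trans; [apply Cmod_sum|].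
 eapply Rle_trans; [apply (sum_le _ (fun _ => Rr))|].
 - intros l Hl. rewrite Cmod_mult, Cmod_R, Cmod_lam_pow. pose proof (Hb l ltac:(lia)).
   pose proof (rl_le1 l). pose proof (pow_le r l ltac:(pose proof r_pos; lra)).
   assert (Rabs (t l) <= Rr)%R by (apply Rabs_le; lra). pose proof (Rabs_pos (t l)). nra.
 - rewrite sum_n_const. replace (S (N - 1)) with N by lia. lra.
Qed.

Lemma ball_C' (z y : C) (eps : R) :
  (Rabs (fst y - fst z) < eps /\ Rabs (snd y - snd z) < eps)%R -> ball z eps y.
Proof. intros [H1 H2]. split; [exact H1| exact H2]. Qed.

Lemma Zset_A z : Zset z -> A_set lam z.
Proof. intros [t [Hb ->]].
 exists (fun j => RtoC (sgn (st t j 0%nat))). split.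
 - intros j. unfold sgn. destruct (Rle_dec 0 _); auto.
 - unfold is_series. apply (proj2 (filterlim_locally _ _)). intros eps.
   pose proof Rr_facts. set (B := (INR N * Rr + 1)%R).
   assert (HB0 : (0 < B)%R) by (unfold B; pose proof INRN_pos; nra).
   destruct (pow_lt_1_zero r ltac:(pose proof r_pos; rewrite Rabs_pos_eq; lra) (eps / B)%R
      ltac:(apply Rdiv_lt_0_compat; [apply cond_pos| auto])) as [N0 HN0].
   exists N0. intros n Hn. apply ball_C'.
   pose proof (P_iter t n) as Hit.
   set (S0 := sum_n (fun j : nat => RtoC (sgn (st t j 0%nat)) * Cpow lam j) n) in *.
   change (@sum_n C_NormedModule (fun j : nat => RtoC (sgn (st t j 0%nat)) * Cpow lam j) n) with S0.
   assert (Hd : S0 - P t = - (Cpow lam (S n) * P (st t (S n)))) by (rewrite Hit; ring).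
   assert (Hc : (Cmod (S0 - P t) < eps)%R).
   { rewrite Hd, Cmod_opp, Cmod_mult, Cmod_lam_pow.
     pose proof (P_bound _ (st_bd t (S n) Hb)). pose proof (HN0 (S n) ltac:(lia)).
     rewrite Rabs_pos_eq in H1 by (apply pow_le; pose proof r_pos; lra).
     pose proof (pow_le r (S n) ltac:(pose proof r_pos; lra)).
     assert (r ^ S n * Cmod (P (st t (S n))) <= r ^ S n * B)%R by (apply Rmult_le_compat_l; [lra| unfold B; lra]).
     assert (r ^ S n * B < eps)%R. { apply Rmult_lt_reg_r with (/ B)%R; [apply Rinv_0_lt_compat; lra|].
       rewrite Rmult_assoc, Rinv_r by lra. rewrite Rmult_1_r. exact H1. }
     lra. }
   pose proof (Rmax_Cmod (S0 - P t)). simpl in H0.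
   split; eapply Rle_lt_trans; [| apply Hc| | apply Hc]; eapply Rle_trans; [| apply H0| | apply H0];
     [apply Rmax_l| apply Rmax_r].
Qed.

Lemma Zset_inv x w : (x = 1 \/ x = -1)%R -> Zset w -> Zset (RtoC x + lam * w).
Proof. intros Hx [t [Hb ->]]. pose proof Rr_facts as [H1 [H2 H3]].
 exists (fun l => if (l =? 0)%nat then (x + rho * t (N - 1)%nat)%R else t (l - 1)%nat). split.
 - intros l Hl. destruct (Nat.eqb_spec l 0).
   + pose proof (Hb (N - 1)%nat ltac:(lia)).
     assert (Rabs (rho * t (N - 1)%nat) <= Rr - 1)%R.
     { rewrite Rabs_mult, <- H2. apply Rmult_le_compat_l; [apply Rabs_pos| apply Rabs_le; lra]. }
     apply Rabs_le_between in H0. destruct Hx; subst; lra.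
   + apply Hb. lia.
 - unfold P. assert (HK : (N - 1 = S (N - 2))%nat) by lia. rewrite HK.
   rewrite (sum_Sn (fun l => RtoC (t l) * Cpow lam l)). rewrite sum_shift.
   rewrite (sum_n_ext (fun l => RtoC (if (S l =? 0)%nat then (x + rho * t (S (N - 2)))%R else t (S l - 1)%nat) * Cpow lam (S l))
      (fun l => lam * (RtoC (t l) * Cpow lam l))).
   2: { intros l. simpl. replace (l - 0)%nat with l by lia. try rewrite Cpow_S. Cring. }
   rewrite Csum_mult_l. simpl (0 =? 0)%nat. cbv iota.
   assert (HN2 : lam * Cpow lam (S (N - 2)) = RtoC rho) by (rewrite <- Cpow_S; replace (S (S (N - 2))) with N by lia; apply lam_N).
   symmetry. change (@eq C (RtoC (x + rho * t (S (N - 2)))%R * Cpow lam 0 + lam * sum_n (fun l : nat => RtoC (t l) * Cpow lam l) (N - 2))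
     (RtoC x + lam * (sum_n (fun l : nat => RtoC (t l) * Cpow lam l) (N - 2) + RtoC (t (S (N - 2))) * Cpow lam (S (N - 2))))).
   replace (RtoC x + lam * (sum_n (fun l : nat => RtoC (t l) * Cpow lam l) (N - 2) + RtoC (t (S (N - 2))) * Cpow lam (S (N - 2))))
     with (RtoC x + lam * sum_n (fun l : nat => RtoC (t l) * Cpow lam l) (N - 2) + RtoC (t (S (N - 2))) * (lam * Cpow lam (S (N - 2)))) by ring.
   rewrite HN2. simpl Cpow. rewrite RtoC_plus, RtoC_mult. ring.
Qed.

Lemma Zset_pm x : (x = 1 \/ x = -1)%R -> Zset (RtoC x).
Proof. intros Hx. pose proof Rr_facts as [H1 _].
 exists (fun l => if (l =? 0)%nat then x else 0%R). split.
 - intros l _. destruct (l =? 0)%nat; destruct Hx; subst; lra.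
 - unfold P. rewrite (sum_single _ _ 0%nat); [simpl; ring| lia|].
   intros l _ Hl. destruct (Nat.eqb_spec l 0); [lia|]. change (@eq C (RtoC 0 * Cpow lam l) 0). ring.
Qed.

Lemma A_Zset z : A_set lam z -> Zset z.
Proof. intros [a [Ha Hs]].
 assert (Hx : forall j, exists x, (x = 1 \/ x = -1)%R /\ a j = RtoC x).
 { intros j. destruct (Ha j); eauto. }
 assert (HQ : forall k s, Zset (sum_n (fun j => a (j + s)%nat * Cpow lam j) k)).
 { induction k; intros s.
   - rewrite sum_O. destruct (Hx s) as [x [Hx1 Hx2]]. simpl. rewrite Hx2.
     replace (RtoC x * 1) with (RtoC x) by ring. apply Zset_pm; auto.
   - rewrite sum_shift. simpl plus at 1.
     rewrite (sum_n_ext (fun l => a (S l + s)%nat * Cpow lam (S l)) (fun l => lam * (a (l + S s)%nat * Cpow lam l))).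
     2: { intros l. replace (S l + s)%nat with (l + S s)%nat by lia. rewrite Cpow_S. Cring. }
     rewrite Csum_mult_l. destruct (Hx s) as [x [Hx1 Hx2]]. simpl. rewrite Hx2.
     change (Zset (RtoC x * 1 + lam * sum_n (fun l : nat => a (l + S s)%nat * Cpow lam l) k)).
     replace (RtoC x * 1) with (RtoC x) by ring. apply Zset_inv; auto. }
 apply Zset_Zh.
 apply (Zh_closed N HN sigc tauc cc (fun l _ => sigc_lt l) (fun k _ => tauc_lt k) sigc_tauc tauc_sigc cc_pos
   (fun j => a j * Cpow lam j) z Hs).
 intros k. apply Zset_Zh. specialize (HQ k 0%nat).
 rewrite (sum_n_ext _ (fun j => a j * Cpow lam j)) in HQ by (intros; rewrite Nat.add_0_r; auto). auto.
Qed.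

Lemma A_iff z : A_set lam z <-> Zh N sigc cc z.
Proof. split; intros.
 - apply Zset_Zh, A_Zset; auto.
 - apply Zset_A, Zset_Zh; auto. Qed.

Lemma conc_main : is_polygon_all_angles (A_set lam) (2 * N) (PI - PI / INR N) /\ nonempty_interior (A_set lam).
Proof. split.
 - destruct (Zh_polygon N HN sigc tauc cc (fun l _ => sigc_lt l) (fun k _ => tauc_lt k) sigc_tauc tauc_sigc cc_pos)
     as [v [H1 [H2 [H3 H4]]]].
   exists v. split; [auto| split; [auto| split; [auto|]]]. intros z. rewrite A_iff. auto.
 - destruct (Zh_interior N HN sigc tauc cc (fun k _ => tauc_lt k) sigc_tauc cc_pos) as [z [e [He Hb]]].
   exists z, e. split; auto. intros w Hw. apply A_iff. auto.
Qed.

End Conc.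


Theorem mainTheorem13 :
  (forall (n : nat) (m : Z) (r : R),
      (2 <= n)%nat -> Z.gcd m (Z.of_nat n) = 1%Z ->
      (Rpower 2 (- / INR n) <= r < 1)%R ->
      let lam := RtoC r * cis (PI * IZR m / INR n) in
      is_polygon_all_angles (A_set lam) (2 * n) (PI * (INR n - 1) / INR n) /\
      nonempty_interior (A_set lam)) /\
  (forall (n : nat) (m : Z) (r : R),
      (1 <= n)%nat -> Z.gcd m (Z.of_nat (2 * n + 1)) = 1%Z ->
      (Rpower 2 (- / INR (2 * n + 1)) <= r < 1)%R ->
      let lam := RtoC r * cis (2 * PI * IZR m / INR (2 * n + 1)) in
      is_polygon_all_angles (A_set lam) (4 * n + 2)
        (2 * INR n * PI / INR (2 * n + 1)) /\
      nonempty_interior (A_set lam)).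
Proof.
  split.
  - intros n m r Hn Hg Hr lam.
    destruct (Z.gcd_bezout m (Z.of_nat n) 1 Hg) as [us [vs Huv]].
    pose proof (conc_main n Hn m us vs Huv r Hr) as Hm.
    assert (HnR : (0 < INR n)%R) by (apply lt_0_INR; lia).
    replace (PI * (INR n - 1) / INR n)%R with (PI - PI / INR n)%R by (field; lra).
    exact Hm.
  - intros n m r Hn Hg Hr lam.
    destruct (Z.gcd_bezout m (Z.of_nat (2 * n + 1)) 1 Hg) as [us [vs Huv]].
    assert (Huv' : ((us * Z.of_nat (n + 1)) * (2 * m) + (vs * (Z.of_nat (2 * n + 1) + 1) - 1) * Z.of_nat (2 * n + 1) = 1)%Z)
      by nia.
    pose proof (conc_main (2 * n + 1) ltac:(lia) (2 * m) _ _ Huv' r Hr) as Hm.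
    assert (HnR : (0 < INR (2 * n + 1))%R) by (apply lt_0_INR; lia).
    replace (4 * n + 2)%nat with (2 * (2 * n + 1))%nat by lia.
    replace (2 * INR n * PI / INR (2 * n + 1))%R with (PI - PI / INR (2 * n + 1))%R.
    2: { rewrite plus_INR, mult_INR in *. simpl (INR 2) in *. simpl (INR 1) in *. field. lra. }
    unfold lam. unfold Submission.lam in Hm.
    replace (2 * PI * IZR m / INR (2 * n + 1))%R with (PI * IZR (2 * m) / INR (2 * n + 1))%R
      by (rewrite mult_IZR; field; lra).
    exact Hm.
Qed.
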